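(* Let $G=\langle a,b,c,t \mid tat^{-1}=a,\ tbt^{-1}=ba,\ tct^{-1}=ca^2\rangle$ be Gersten's free-by-cyclic group. Then for every field $\mathbb{F}$ of positive characteristic and every $d\ge 1$, there is no injective homomorphism $G\to GL(d,\mathbb{F})$.
   Context: $G$ is the semidirect product $F_3\rtimes_\alpha\mathbb{Z}$ where $F_3$ is free on $a,b,c$ and $\alpha(a)=a$, $\alpha(b)=ba$, $\alpha(c)=ca^2$. *)

(* Defs.v *)
(* Gersten's group G = F_3 ⋊_alpha Z, built concretely:
   elements are pairs (w, n) with w a freely reduced word in a,b,c
   (representing w * t^n), with (w,m)(v,n) = (w * alpha^m(v), m+n),
   so that t w t^-1 = alpha(w). *)
From HB Require Import structures.
From mathcomp Require Import all_boot all_order all_algebra.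
Set Implicit Arguments. Unset Strict Implicit. Unset Printing Implicit Defensive.
Import Order.TTheory GRing.Theory Num.Theory.

(* a letter: generator index (0=a,1=b,2=c) and a flag (true = inverse) *)
Definition letter := ('I_3 * bool)%type.
Definition linv (x : letter) : letter := (x.1, ~~ x.2).

Definition fstep (x : letter) (acc : seq letter) : seq letter :=
  match acc with
  | y :: acc' => if y == linv x then acc' else x :: acc
  | [::] => [:: x]
  end.
Definition fred (w : seq letter) : seq letter := foldr fstep [::] w.

Definition reduced (w : seq letter) : bool := sorted (fun x y => y != linv x) w.

Lemma fred_reduced w : reduced (fred w).
Proof.
elim: w => [|x w IH] //=.
rewrite /fstep; case E: (fred w) IH => [|y acc] //= H.
case: ifP => Hy; first by case: acc {E} H => //= z acc /andP[].
by rewrite /= Hy H.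
Qed.

Definition gen (i : 'I_3) (inv : bool) : letter := (i, inv).
Definition a_ : 'I_3 := @Ordinal 3 0 isT.
Definition b_ : 'I_3 := @Ordinal 3 1 isT.
Definition c_ : 'I_3 := @Ordinal 3 2 isT.

Definition word_inv (w : seq letter) : seq letter := rev (map linv w).

Definition alpha_gen (i : 'I_3) : seq letter :=
  if val i == 0 then [:: (a_, false)]
  else if val i == 1 then [:: (b_, false); (a_, false)]
  else [:: (c_, false); (a_, false); (a_, false)].
Definition alphainv_gen (i : 'I_3) : seq letter :=
  if val i == 0 then [:: (a_, false)]
  else if val i == 1 then [:: (b_, false); (a_, true)]
  else [:: (c_, false); (a_, true); (a_, true)].

Definition subst (img : 'I_3 -> seq letter) (w : seq letter) : seq letter :=
  fred (flatten (map (fun x : letter => if x.2 then word_inv (img x.1) else img x.1) w)).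

Definition alpha_pow (n : int) (w : seq letter) : seq letter :=
  match n with
  | Posz k => iter k (subst alpha_gen) w
  | Negz k => iter k.+1 (subst alphainv_gen) w
  end.

Definition G := {p : seq letter * int | reduced p.1}.

Definition gmul (g h : G) : G :=
  exist (fun p : seq letter * int => reduced p.1)
    (fred ((val g).1 ++ alpha_pow (val g).2 (val h).1), ((val g).2 + (val h).2)%R)
    (fred_reduced _).

Definition GL_hom (F : fieldType) (d : nat) (phi : G -> 'M[F]_d) : Prop :=
  (forall g, phi g \in unitmx) /\ (forall g h, phi (gmul g h) = (phi g *m phi h)%R).

(* Main.v *)
Require Import Defs.
From HB Require Import structures.
From mathcomp Require Import all_boot all_order all_fingroup all_algebra all_field.
From mathcomp Require Import ring lra.
From Stdlib Require Import Classical.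
Require Import Defs.
Set Implicit Arguments. Unset Strict Implicit. Unset Printing Implicit Defensive.
Import Order.TTheory GRing.Theory Num.Theory.
Local Open Scope ring_scope.

Section Tors.
Variable d : nat.
Variables s r : 'S_d.

Definition Mg (R : pzRingType) : 'M[R]_d := perm_mx s + perm_mx s - 1 - perm_mx r.
Definition Ng (R : pzRingType) : 'M[R]_d := perm_mx s - 1.

Lemma ker_sub (x : 'cV[rat]_d) : Mg _ *m x = 0 -> Ng _ *m x = 0.
Proof.
rewrite /Mg /Ng !mulmxBl !mulmxDl !mul1mx -!row_permE => H.
have Hi i : x (s i) 0 + x (s i) 0 = x i 0 + x (r i) 0.
  move/matrixP: H => /(_ i 0); rewrite !mxE.
  by move/eqP; rewrite subr_eq0 subr_eq => /eqP ->; rewrite addrC.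
pose S := \sum_i x i 0 ^+ 2; pose P := \sum_i x i 0 * x (r i) 0.
have sq (t : 'S_d) : \sum_i x (t i) 0 ^+ 2 = S.
  by rewrite /S; exact/esym/(reindex_inj (@perm_inj _ t)).
have E1 : \sum_i (x (s i) 0 + x (s i) 0) ^+ 2 = S *+ 4.
  rewrite -(sq s) -sumrMnl; apply: eq_bigr => i _; ring.
have E2 : \sum_i (x i 0 + x (r i) 0) ^+ 2 = \sum_i x i 0 ^+ 2 + \sum_i x (r i) 0 ^+ 2 + P *+ 2.
  by rewrite /P -sumrMnl -!big_split; apply: eq_bigr => i _ /=; ring.
have E2' : \sum_i (x i 0 - x (r i) 0) ^+ 2 = \sum_i x i 0 ^+ 2 + \sum_i x (r i) 0 ^+ 2 - P *+ 2.
  by rewrite /P -sumrMnl -big_split -sumrB; apply: eq_bigr => i _ /=; ring.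
rewrite sq -/S in E2 E2'.
have HP : P = S.
  have : S *+ 4 = S + S + P *+ 2 by rewrite -E1 -E2; apply: eq_bigr => i _; rewrite Hi.
  move=> h; lra.
have E3 : \sum_i (x i 0 - x (r i) 0) ^+ 2 = 0 by rewrite E2' HP; lra.
have Hr i : x (r i) 0 = x i 0.
  have /eqP := E3; rewrite psumr_eq0 => [/allP /(_ i (mem_index_enum _))|]; last first.
    by move=> j _; rewrite sqr_ge0.
  by rewrite /= sqrf_eq0 subr_eq0 => /eqP.
apply/matrixP => i j; rewrite (ord1 j) !mxE.
apply/eqP; rewrite subr_eq0; apply/eqP.
have := Hi i; rewrite Hr => h.
lra.
Qed.

Lemma col_mulE (R : pzSemiRingType) m n p (M : 'M[R]_(m, n)) (Y : 'M[R]_(n, p)) j :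
  M *m col j Y = col j (M *m Y).
Proof. by apply/matrixP => a b; rewrite !mxE; apply: eq_bigr => k _; rewrite !mxE. Qed.

Lemma exX : exists X : 'M[rat]_d, Ng rat = X *m Mg rat.
Proof.
have : (Ng rat <= Mg rat)%MS; last by case/submxP => X ->; exists X.
rewrite submxE; apply/eqP/matrixP => i j; rewrite [RHS]mxE.
have HY := mulmx_coker (Mg rat).
have H0 : Mg rat *m col j (cokermx (Mg rat)) = 0.
  by rewrite col_mulE HY; apply/matrixP => a b; rewrite !mxE.
move: (ker_sub H0); rewrite col_mulE.
by move/matrixP => /(_ i 0); rewrite !mxE.
Qed.

Lemma map_Mg : map_mx intr (Mg int) = Mg rat.
Proof. by rewrite /Mg !map_mxD !map_mxN map_mx1 !map_perm_mx. Qed.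
Lemma map_Ng : map_mx intr (Ng int) = Ng rat.
Proof. by rewrite /Ng !map_mxD !map_mxN map_mx1 !map_perm_mx. Qed.

Lemma exY : exists (Dz : int) (Y : 'M[int]_d), 0 < Dz /\ Dz *: Ng int = Y *m Mg int.
Proof.
have [X HX] := exX.
pose Dz : int := \prod_(ij : 'I_d * 'I_d) denq (X ij.1 ij.2).
pose Y := \matrix_(i, j) (numq (X i j) * \prod_(ij | ij != (i, j)) denq (X ij.1 ij.2)).
exists Dz, Y; split; first by apply: prodr_gt0 => ij _; apply: denq_gt0.
have HY : map_mx intr Y = Dz%:~R *: X.
  apply/matrixP => i j; rewrite !mxE /Dz [in RHS](bigD1 (i, j)) //= !intrM numqE.
  by rewrite [RHS]mulrC mulrA.
have H2 : Dz%:~R *: Ng rat = map_mx intr Y *m Mg rat by rewrite HY -scalemxAl HX.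
have H3 : map_mx (intr : int -> rat) (Dz *: Ng int) = map_mx intr (Y *m Mg int).
  by rewrite map_mxZ map_mxM map_Ng map_Mg.
apply/matrixP => i j; apply: (@intr_inj rat).
move/matrixP: H3 => /(_ i j) h.
by move: h; rewrite !mxE.
Qed.

Section Ev.
Variables (E : fieldType) (f : 'I_d -> E).
Hypothesis fnz : forall i, f i != 0.
Definition ev (c : 'rV[int]_d) : E := \prod_j f j ^ c 0 j.

Lemma fU i : f i \is a GRing.unit. Proof. by rewrite unitfE. Qed.

Lemma evU c : ev c \is a GRing.unit.
Proof.
rewrite /ev; elim/big_rec: _ => [|j x _ Hx]; first exact: unitr1.
by rewrite unitrM Hx andbT unitrXz // fU.
Qed.

Lemma evD c1 c2 : ev (c1 + c2) = ev c1 * ev c2.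
Proof. by rewrite /ev -big_split; apply: eq_bigr => j _; rewrite mxE exprzDr // fU. Qed.

Lemma ev0 : ev 0 = 1.
Proof. by rewrite /ev big1 // => j _; rewrite mxE expr0z. Qed.

Lemma evN c : ev (- c) = (ev c)^-1.
Proof.
have := evD c (- c); rewrite subrr ev0 => h.
by apply: (mulrI (evU c)); rewrite -h divrr // evU.
Qed.

Lemma evB c1 c2 : ev (c1 - c2) = ev c1 / ev c2.
Proof. by rewrite evD evN. Qed.

Lemma prodXz (I : Type) (rr : seq I) (g : I -> E) z : (forall i, g i != 0) ->
  \prod_(i <- rr) g i ^ z = (\prod_(i <- rr) g i) ^ z.
Proof.
move=> H; elim: rr => [|i rr IH]; first by rewrite !big_nil exp1rz.
rewrite !big_cons IH exprzMl // unitfE //.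
by elim/big_rec: _ => [|j x _ Hx]; rewrite ?oner_neq0 // mulf_neq0.
Qed.

Lemma evZ z c : ev (z *: c) = ev c ^ z.
Proof.
rewrite /ev -prodXz; last by move=> j; rewrite expfz_neq0.
by apply: eq_bigr => j _; rewrite mxE exprz_exp mulrC.
Qed.

Lemma ev_sum (I : finType) (c : I -> 'rV[int]_d) : ev (\sum_i c i) = \prod_i ev (c i).
Proof. exact: (big_morph ev evD ev0). Qed.

Lemma ev_perm (t : 'S_d) k : ev (row k (perm_mx t)) = f (t k).
Proof.
rewrite /ev (bigD1 (t k)) //= big1 => [|j hj]; rewrite !mxE.
  by rewrite eqxx expr1z mulr1.
by rewrite eq_sym (negbTE hj) expr0z.
Qed.
Lemma ev_one k : ev (row k (1 : 'M[int]_d)) = f k.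
Proof.
rewrite /ev (bigD1 k) //= big1 => [|j hj]; rewrite !mxE.
  by rewrite eqxx expr1z mulr1.
by rewrite eq_sym (negbTE hj) expr0z.
Qed.
End Ev.

Lemma torsion (E : fieldType) (f : 'I_d -> E) : (forall i, f i != 0) ->
  (forall i, f (s i) ^+ 2 = f i * f (r i)) ->
  exists D, (0 < D)%N /\ forall i, f (s i) ^+ D = f i ^+ D.
Proof.
move=> fnz H.
have [Dz [Y [Dz0 HY]]] := exY.
have rowM k : ev f (row k (Mg int)) = 1.
  rewrite /Mg !linearB linearD /= !evB // evD // !ev_perm // ev_one //.
  by rewrite -expr2 H [f k * _ / f k]mulrAC divff // mul1r divff.
have rowN i : ev f (row i (Dz *: Ng int)) = (f (s i) / f i) ^ Dz.
  by rewrite linearZ /= evZ // /Ng linearB /= evB // !ev_perm // ev_one.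
have Hi i : (f (s i) / f i) ^ Dz = 1.
  rewrite -rowN HY row_mul mulmx_sum_row ev_sum //.
  by apply: big1 => k _; rewrite evZ // rowM exp1rz.
case: Dz Dz0 {HY rowN} Hi => [D|D] // D0 Hi.
exists D; split=> // i.
by apply: divr1_eq; rewrite -expr_div_n; exact: Hi.
Qed.
End Tors.

Lemma irr_div (F : fieldType) (q : {poly F}) : (1 < size q)%N ->
  exists r, r %| q /\ irreducible_poly r.
Proof.
move: {2}(size q) (leqnn (size q)) => m; elim: m q => [|m IH] q hm hq.
  by move: (leq_trans hq hm).
have [irq|nirq] := classic (irreducible_poly q); first by exists q.
have : ~ (forall r : {poly F}, size r != 1 -> r %| q -> r %= q) by move=> h; apply: nirq.
move/not_all_ex_not => [r /not_all_ex_not [hr1 /not_all_ex_not [hrq hne]]].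
have q0 : q != 0 by rewrite -size_poly_gt0 ltnW.
have r0 : r != 0 by apply: contraTneq hrq => ->; rewrite dvd0p.
have hsz : (size r < size q)%N.
  rewrite ltn_neqAle dvdp_leq // andbT dvdp_size_eqp //.
  by apply/negP => h; apply: hne.
have hr : (1 < size r)%N by rewrite ltn_neqAle eq_sym hr1 size_poly_gt0.
have [r' [hr' ir']] := IH r (leq_trans hsz hm) hr.
by exists r'; split=> //; apply: dvdp_trans hr' hrq.
Qed.

Lemma split_ex n : forall (F : fieldType) (q : {poly F}), q != 0 -> (size q <= n)%N ->
  exists (E : fieldType) (f : {rmorphism F -> E}) (rs : seq E),
    map_poly f q %= \prod_(z <- rs) ('X - z%:P).
Proof.
elim: n => [|n IH] F q q0 hsz.
  by move: hsz; rewrite leqn0 size_poly_eq0 (negbTE q0).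
have [hq1|hq1] := leqP (size q) 1.
  exists F, idfun, [::]; rewrite big_nil map_poly_id // -size_poly_eq1.
  by rewrite eqn_leq hq1 size_poly_gt0.
have [r [hrq [r1 rirr]]] := irr_div hq1.
have [K _ [x rx _]] := irredp_FAdjoin (conj r1 rirr).
have : root (map_poly (in_alg K) q) x.
  by move: hrq => /dvdpP [q' ->]; rewrite rmorphM rootM rx orbT.
move/factor_theorem => [q1 Hq1].
have q10 : q1 != 0.
  apply: contraNneq q0 => h; move: Hq1; rewrite h mul0r.
  by move/eqP; rewrite map_poly_eq0.
have hsz1 : (size q1 <= n)%N.
  have : size (map_poly (in_alg K) q) = size (q1 * ('X - x%:P)) by rewrite Hq1.
  rewrite size_map_poly size_Mmonic ?monicXsubC //.
  by rewrite size_XsubC addn2 => h; move: hsz; rewrite h ltnS.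
have [E [g [rs Hrs]]] := IH K q1 q10 hsz1.
exists E, (g \o in_alg K), (g x :: rs).
rewrite map_poly_comp Hq1 rmorphM /= big_cons mulrC.
rewrite rmorphB /= map_polyX map_polyC /=.
by apply: eqp_mull.
Qed.

Section Trig.
Variable E : fieldType.

Definition cj n (P M : 'M[E]_n) := P *m M *m invmx P.

Lemma cjM n (P M N : 'M[E]_n) : P \in unitmx -> cj P (M *m N) = cj P M *m cj P N.
Proof. by move=> hP; rewrite /cj !mulmxA mulmxKV. Qed.

Lemma cj_prod n (P M : 'M[E]_n) (rs : seq E) : P \in unitmx ->
  cj P (\prod_(z <- rs) (M - z%:M)) = \prod_(z <- rs) (cj P M - z%:M).
Proof.
move=> hP; elim: rs => [|z rs IH].
  by rewrite !big_nil /cj mulmx1 mulmxV.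
rewrite !big_cons -!mulmxE cjM // IH; congr (_ *m _).
by rewrite /cj mulmxBr mulmxBl mul_mx_scalar -scalemxAl mulmxV // scalemx1.
Qed.

Lemma eigvec n (T : 'M[E]_n) (Pr : 'rV[E]_n -> Prop) rs :
  (forall v z, Pr v -> Pr (v *m (T - z%:M))) ->
  forall w, Pr w -> w != 0 -> w *m \prod_(z <- rs) (T - z%:M) = 0 ->
  exists v b, [/\ Pr v, v != 0 & v *m T = b *: v].
Proof.
move=> Hcl; elim: rs => [|z rs IH] w Pw w0.
  by rewrite big_nil mulmx1 => h; move: w0; rewrite h eqxx.
rewrite big_cons -mulmxE mulmxA.
have [h0|h0] := eqVneq (w *m (T - z%:M)) 0.
  move=> _; exists w, z; split => //.
  by apply/eqP; rewrite -subr_eq0 -mul_mx_scalar -mulmxBr h0.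
by apply: IH => //; apply: Hcl.
Qed.

Lemma lowblk n (M N : 'M[E]_(1 + n)) : ursubmx M = 0 -> ursubmx N = 0 ->
  ursubmx (M *m N) = 0 /\ drsubmx (M *m N) = drsubmx M *m drsubmx N.
Proof.
move=> hM hN; rewrite -(submxK M) -(submxK N) hM hN mulmx_block.
by rewrite !block_mxKur !block_mxKdr !mul0mx !mulmx0 !addr0 add0r.
Qed.

Lemma ursub_sc n (M : 'M[E]_(1 + n)) z : ursubmx (M - z%:M) = ursubmx M.
Proof.
by apply/matrixP => i j; rewrite !mxE eq_shift ?mulr0n ?subr0.
Qed.

Lemma drsub_sc n (M : 'M[E]_(1 + n)) z : drsubmx (M - z%:M) = drsubmx M - z%:M.
Proof.
by apply/matrixP => i j; rewrite !mxE eq_shift ?mulr0n ?subr0.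
Qed.

Lemma lowblk_prod n (M : 'M[E]_(1 + n)) rs : ursubmx M = 0 ->
  ursubmx (\prod_(z <- rs) (M - z%:M)) = 0 /\
  drsubmx (\prod_(z <- rs) (M - z%:M)) = \prod_(z <- rs) (drsubmx M - z%:M).
Proof.
move=> hM; elim: rs => [|z rs [IH1 IH2]].
  rewrite !big_nil; have -> : (1 : 'M[E]_(1 + n)) = block_mx 1%:M 0 0 1%:M.
    exact: scalar_mx_block.
  by rewrite block_mxKur block_mxKdr.
have hz : ursubmx (M - z%:M) = 0.
  by rewrite ursub_sc.
rewrite !big_cons -!mulmxE; have [h1 h2] := lowblk hz IH1.
split=> //; rewrite h2 IH2; congr (_ *m _).
by rewrite drsub_sc.
Qed.

Lemma top_blk n (M : 'M[E]_(1 + n)) a :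
  (pid_mx 1 : 'M_(1, 1 + n)) *m M = a *: pid_mx 1 -> ursubmx M = 0.
Proof.
rewrite -{1}(submxK M) pid_mx_row mul_row_block scale_row_mx.
by case/eq_row_mx => _; rewrite mul1mx mul0mx addr0 scaler0.
Qed.

Lemma cj_comp n (X Y M : 'M[E]_n) : X \in unitmx -> Y \in unitmx ->
  cj (X *m Y) M = cj X (cj Y M).
Proof.
move=> hX hY; have hXY : X *m Y \in unitmx by rewrite unitmx_mul hX hY.
rewrite /cj.
have -> : invmx (X *m Y) = invmx Y *m invmx X.
  have h1 : (X *m Y) *m (invmx Y *m invmx X) = 1%:M.
    by rewrite mulmxA -(mulmxA X) mulmxV // mulmx1 mulmxV.
  by rewrite -[LHS]mulmx1 -h1 mulmxA mulVmx // mul1mx.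
by rewrite !mulmxA.
Qed.

Lemma trig_blk n (ul : 'M[E]_1) dl (M' Q : 'M[E]_n) : is_trig_mx (Q *m M' *m invmx Q) ->
  is_trig_mx (block_mx 1%:M 0 0 Q *m block_mx ul 0 dl M' *m block_mx 1%:M 0 0 (invmx Q)).
Proof.
move=> h; rewrite !mulmx_block !(mul1mx, mul0mx, mulmx0, mulmx1, addr0, add0r).
by rewrite is_trig_block_mx // eqxx mx11_is_trig.
Qed.

Lemma cotrig n (A T : 'M[E]_n) rs : A *m T = T *m A ->
  \prod_(z <- rs) (A - z%:M) = 0 -> \prod_(z <- rs) (T - z%:M) = 0 ->
  exists P, [/\ P \in unitmx, is_trig_mx (cj P A) & is_trig_mx (cj P T)].
Proof.
elim: n A T => [|n IH] A T hAT hA hT.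
  exists 1%:M; split; rewrite ?unitmx1 //; apply/is_trig_mxP => -[] //.
have [v0 [a [_ v00 hv0]]] : exists (v : 'rV[E]_n.+1) a, [/\ True, v != 0 & v *m A = a *: v].
  have hd : (delta_mx 0 0 : 'rV[E]_n.+1) != 0.
    apply/negP => /eqP/matrixP/(_ 0 0); rewrite !mxE eqxx /= => /eqP.
    by rewrite oner_eq0.
  have := @eigvec _ A (fun _ => True) rs (fun _ _ _ => I) _ I hd.
  by rewrite hA mulmx0 => /(_ erefl).
have [v [b [hva v0' hvb]]] : exists (v : 'rV[E]_n.+1) b, [/\ v *m A = a *: v, v != 0 & v *m T = b *: v].
  apply: (@eigvec _ T (fun v => v *m A = a *: v) rs _ v0) => //.
  - move=> w z /= hw.
    have hc : (T - z%:M) *m A = A *m (T - z%:M).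
      by rewrite mulmxBl mulmxBr mul_scalar_mx mul_mx_scalar hAT.
    by rewrite -mulmxA hc mulmxA hw -scalemxAl.
  - by rewrite hT mulmx0.
pose U := row_ebase v; pose c := col_ebase v.
have hU : U \in unitmx := row_ebase_unit v.
have hc : c \in unitmx := col_ebase_unit v.
have hv := mulmx_ebase v; rewrite rank_rV v0' /= -/U -/c in hv.
pose u := (pid_mx 1 : 'M_(1, 1 + n)) *m U.
have hu : u = invmx c *m v by rewrite -hv -mulmxA mulKmx.
have huA : u *m A = a *: u by rewrite hu -mulmxA hva scalemxAr.
have huT : u *m T = b *: u by rewrite hu -mulmxA hvb scalemxAr.
pose A1 : 'M_(1 + n) := cj U A; pose T1 : 'M_(1 + n) := cj U T.
have hA1 : ursubmx A1 = 0.
  apply: (@top_blk _ _ a); rewrite /A1 /cj !mulmxA -/u huA -scalemxAl.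
  by rewrite /u mulmxK.
have hT1 : ursubmx T1 = 0.
  apply: (@top_blk _ _ b); rewrite /T1 /cj !mulmxA -/u huT -scalemxAl.
  by rewrite /u mulmxK.
have hAT' : drsubmx A1 *m drsubmx T1 = drsubmx T1 *m drsubmx A1.
  have [_ <-] := lowblk hA1 hT1; have [_ <-] := lowblk hT1 hA1.
  by rewrite /A1 /T1 -!cjM // hAT.
have hA' : \prod_(z <- rs) (drsubmx A1 - z%:M) = 0.
  have [_ <-] := lowblk_prod rs hA1.
  by rewrite /A1 -cj_prod // hA /cj mulmx0 mul0mx; apply/matrixP => i j; rewrite !mxE.
have hT' : \prod_(z <- rs) (drsubmx T1 - z%:M) = 0.
  have [_ <-] := lowblk_prod rs hT1.
  by rewrite /T1 -cj_prod // hT /cj mulmx0 mul0mx; apply/matrixP => i j; rewrite !mxE.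
have [Q [hQ hQA hQT]] := IH _ _ hAT' hA' hT'.
pose Qb : 'M[E]_(1 + n) := block_mx 1%:M 0 0 Q.
have hQb : Qb \in unitmx by rewrite block_diag_mx_unit unitmx1 hQ.
have hiQ : invmx Qb = block_mx 1%:M 0 0 (invmx Q).
  by rewrite invmx_block_diag // invmx1.
exists (Qb *m (U : 'M_(1 + n))); split.
- by rewrite unitmx_mul hQb hU.
- have -> : cj (Qb *m (U : 'M_(1 + n))) A = cj Qb A1 by exact: cj_comp.
  rewrite /cj hiQ -(submxK A1) hA1.
  exact: trig_blk.
- have -> : cj (Qb *m (U : 'M_(1 + n))) T = cj Qb T1 by exact: cj_comp.
  rewrite /cj hiQ -(submxK T1) hT1.
  exact: trig_blk.
Qed.
End Trig.

Section Asm.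
Variable E : fieldType.

Lemma trig_mul n (U V : 'M[E]_n) : is_trig_mx U -> is_trig_mx V ->
  is_trig_mx (U *m V) /\ forall i, (U *m V) i i = U i i * V i i.
Proof.
move=> /is_trig_mxP hU /is_trig_mxP hV; split.
  apply/is_trig_mxP => i j hij; rewrite mxE big1 // => k _.
  have [hik|hki] := ltnP i k; first by rewrite hU // mul0r.
  by rewrite hV ?mulr0 // (leq_ltn_trans hki hij).
move=> i; rewrite mxE (bigD1 i) //= big1 ?addr0 // => k hk.
have [hik|hki] := ltnP i k; first by rewrite hU // mul0r.
by rewrite hV ?mulr0 // ltn_neqAle hki andbT; apply: contra hk => /eqP/val_inj ->.
Qed.

Lemma char_poly_cj n (P M : 'M[E]_n) : P \in unitmx -> char_poly (cj P M) = char_poly M.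
Proof.
move=> hP; rewrite /char_poly /char_poly_mx /cj !map_mxM map_invmx.
set Q := map_mx polyC P.
have hQ : Q \in unitmx by rewrite map_unitmx.
have -> : 'X%:M - Q *m map_mx polyC M *m invmx Q = Q *m ('X%:M - map_mx polyC M) *m invmx Q.
  by rewrite mulmxBr mulmxBl mul_mx_scalar -scalemxAl mulmxV // scalemx1.
by rewrite !det_mulmx mulrAC -det_mulmx mulmxV // det1 mul1r.
Qed.
End Asm.

Section Key.
Variable E : fieldType.

Lemma perm_of m (f g : 'I_m -> E) :
  \prod_i ('X - (f i)%:P) = \prod_i ('X - (g i)%:P) -> exists s : 'S_m, forall i, f i = g (s i).
Proof.
move=> h.
have : perm_eq [tuple f i | i < m] [tuple g i | i < m].
  apply: prod_XsubC_eq; rewrite !big_tuple.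
  by under eq_bigr do rewrite tnth_mktuple; under [in RHS]eq_bigr do rewrite tnth_mktuple.
case/tuple_permP => s hs; exists s => i.
have ht : [tuple f i | i < m] = [tuple tnth [tuple g i | i < m] (s i) | i < m] by apply: val_inj.
by have := congr1 (fun t => tnth t i) ht; rewrite /= !tnth_mktuple.
Qed.

Lemma trig_pow n (U : 'M[E]_n.+1) : is_trig_mx U -> forall k,
  is_trig_mx (U ^+ k) /\ forall i, (U ^+ k) i i = U i i ^+ k.
Proof.
move=> hU; elim=> [|k [IH1 IH2]].
  split; last by move=> i; rewrite expr0 !mxE eqxx.
  by apply/is_trig_mxP => i j hij; rewrite expr0 !mxE; case: eqP => // hh; move: hij; rewrite hh ltnn.
have [h1 h2] := trig_mul IH1 hU.
by rewrite exprSr -mulmxE; split=> // i; rewrite h2 IH2 exprSr.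
Qed.

Lemma cj_pow n (P M : 'M[E]_n.+1) k : P \in unitmx -> cj P (M ^+ k) = cj P M ^+ k.
Proof.
move=> hP; elim: k => [|k IH]; first by rewrite !expr0 /cj mulmx1 mulmxV.
by rewrite !exprSr -!mulmxE cjM // IH.
Qed.

Lemma cj_inj n (P X Y : 'M[E]_n) : P \in unitmx -> cj P X = cj P Y -> X = Y.
Proof.
move=> hP h; have := congr1 (fun M => invmx P *m M *m P) h.
by rewrite /cj !mulmxA !mulVmx // !mul1mx -!mulmxA !mulVmx // !mulmx1.
Qed.

Lemma frob_pow (R : nzRingType) p (hp : p \in [pchar R]) (x : R) k :
  (x + 1) ^+ (p ^ k) = x ^+ (p ^ k) + 1.
Proof.
elim: k => [|k IH]; first by rewrite expn0 !expr1.
have := pFrobenius_autD_comm hp (commr1 (x ^+ (p ^ k))).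
by rewrite !pFrobenius_autE expr1n -IH -!exprM -expnSr.
Qed.

Lemma pchar_mx n p : p \in [pchar E] -> p \in [pchar 'M[E]_n.+1].
Proof.
rewrite !inE => /andP[-> /eqP h] /=; apply/eqP.
have -> : (p%:R : 'M[E]_n.+1) = (p%:R)%:M.
  by elim: p {h} => [|k IH]; rewrite ?raddf0 // !mulrSr IH raddfD.
by rewrite h raddf0.
Qed.
End Key.

Lemma key_E (E : fieldType) (p : nat) : p \in [pchar E] -> forall n (A T B C : 'M[E]_n.+1) (rs : seq E),
  T \in unitmx -> B \in unitmx -> C \in unitmx ->
  T *m A = A *m T -> T *m B = B *m A *m T -> T *m C = C *m A *m A *m T ->
  \prod_(z <- rs) (A - z%:M) = 0 -> \prod_(z <- rs) (T - z%:M) = 0 ->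
  exists N, (0 < N)%N /\ A ^+ N = 1.
Proof.
move=> hp n A T B C rs hT hB hC hTA hTB hTC hAr hTr.
have [P [hP hUA hUT]] := cotrig (esym hTA) hAr hTr.
set UA := cj P A in hUA; set UT := cj P T in hUT.
pose al i := UA i i; pose ta i := UT i i.
have ta0 i : ta i != 0.
  have : \det UT != 0.
    by rewrite -unitfE -unitmxE /UT /cj !unitmx_mul hP hT unitmx_inv hP.
  rewrite (det_trig hUT); apply: contraNneq => h.
  by rewrite (bigD1 i) //= -/(ta i) h mul0r.
have cp1 : char_poly (A *m T) = char_poly T.
  have -> : A *m T = cj (invmx B) T.
    by rewrite /cj invmxK -mulmxA hTB !mulmxA mulVmx // mul1mx.
  by rewrite char_poly_cj // unitmx_inv.
have cp2 : char_poly (A *m A *m T) = char_poly T.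
  have -> : A *m A *m T = cj (invmx C) T.
    by rewrite /cj invmxK -[RHS]mulmxA hTC !mulmxA mulVmx // mul1mx.
  by rewrite char_poly_cj // unitmx_inv.
have [t1 d1] := trig_mul hUA hUT.
have [t0 d0] := trig_mul hUA hUA.
have [t2 d2] := trig_mul t0 hUT.
have [s hs] : exists s : 'S_n.+1, forall i, al i * ta i = ta (s i).
  apply: perm_of; rewrite -(char_poly_trig hUT).
  rewrite /UT char_poly_cj // -cp1 -(char_poly_cj _ hP) cjM // (char_poly_trig t1).
  by apply: eq_bigr => i _; rewrite d1.
have [r hr] : exists r : 'S_n.+1, forall i, al i * al i * ta i = ta (r i).
  apply: perm_of; rewrite -(char_poly_trig hUT).
  rewrite /UT char_poly_cj // -cp2 -(char_poly_cj _ hP) !cjM // (char_poly_trig t2).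
  by apply: eq_bigr => i _; rewrite d2 d0.
have hsr i : ta (s i) ^+ 2 = ta i * ta (r i) by rewrite -hs -hr; ring.
have [D [D0 hD]] := torsion ta0 hsr.
have alD i : al i ^+ D = 1.
  apply: (mulIf (expf_neq0 D (ta0 i))); rewrite mul1r -exprMn hs; exact: hD.
have [tV dV] := trig_pow hUA D.
set V := UA ^+ D in tV dV.
have hV : (V - 1) ^+ n.+1 = 0.
  have := Cayley_Hamilton V; rewrite (char_poly_trig tV).
  under eq_bigr do rewrite dV alD.
  rewrite prodr_const card_ord rmorphXn rmorphB /= horner_mx_X horner_mx_C.
  by [].
have hpM := pchar_mx n hp.
have hp1 : (1 < p)%N by apply: prime_gt1; case/andP: hp.
have hVp : V ^+ (p ^ n.+1) = 1.
  have := frob_pow hpM (V - 1) n.+1; rewrite subrK => ->.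
  rewrite -(subnKC (ltnW (ltn_expl n.+1 hp1))) exprD hV mul0r add0r //.
exists (D * p ^ n.+1)%N; split.
  by rewrite muln_gt0 D0 expn_gt0 ltnW.
apply: (cj_inj hP); rewrite cj_pow // exprM -/UA -/V hVp.
by rewrite /cj mulmx1 mulmxV.
Qed.

Lemma ann_horner (E : fieldType) n (M : 'M[E]_n.+1) rs :
  horner_mx M (\prod_(z <- rs) ('X - z%:P)) = \prod_(z <- rs) (M - z%:M).
Proof.
rewrite rmorph_prod; apply: eq_bigr => z _.
by rewrite rmorphB /= horner_mx_X horner_mx_C.
Qed.

Lemma key (F : fieldType) (p : nat) : p \in [pchar F] -> forall n (A T B C : 'M[F]_n.+1),
  A \in unitmx -> T \in unitmx -> B \in unitmx -> C \in unitmx ->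
  T *m A = A *m T -> T *m B = B *m A *m T -> T *m C = C *m A *m A *m T ->
  exists N, (0 < N)%N /\ A ^+ N = 1.
Proof.
move=> hp n A T B C hA hT hB hC hTA hTB hTC.
pose q := char_poly A * char_poly T.
have qm : q \is monic by rewrite monicMl ?char_poly_monic.
have [E [f [rs hrs]]] := split_ex (monic_neq0 qm) (leqnn (size q)).
have hq : map_poly f q = \prod_(z <- rs) ('X - z%:P).
  by apply/eqP; rewrite -eqp_monic ?monic_prod_XsubC ?map_monic.
have hq' : map_poly f q = char_poly (map_mx f A) * char_poly (map_mx f T).
  by rewrite rmorphM /= !map_char_poly.
have hAr : \prod_(z <- rs) (map_mx f A - z%:M) = 0.
  by rewrite -ann_horner -hq hq' rmorphM /= Cayley_Hamilton mul0r.
have hTr : \prod_(z <- rs) (map_mx f T - z%:M) = 0.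
  by rewrite -ann_horner -hq hq' mulrC rmorphM /= Cayley_Hamilton mul0r.
have hpE : p \in [pchar E] by rewrite (fmorph_pchar f).
have uT : map_mx f T \in unitmx by rewrite map_unitmx.
have uB : map_mx f B \in unitmx by rewrite map_unitmx.
have uC : map_mx f C \in unitmx by rewrite map_unitmx.
have r1 : map_mx f T *m map_mx f A = map_mx f A *m map_mx f T by rewrite -!map_mxM hTA.
have r2 : map_mx f T *m map_mx f B = map_mx f B *m map_mx f A *m map_mx f T.
  by rewrite -!map_mxM hTB.
have r3 : map_mx f T *m map_mx f C = map_mx f C *m map_mx f A *m map_mx f A *m map_mx f T.
  by rewrite -!map_mxM hTC.
have [N [N0 hN]] := key_E hpE uT uB uC r1 r2 r3 hAr hTr.
exists N; split => //; apply: (@map_mx_inj _ _ f).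
by rewrite rmorphXn /= hN map_mx1.
Qed.

Definition mkG (w : seq letter) (n : int) (h : reduced w) : G :=
  exist (fun p : seq letter * int => reduced p.1) (w, n) h.

Definition ge : G := @mkG [::] 0 isT.
Definition ga : G := @mkG [:: (a_, false)] 0 isT.
Definition gb : G := @mkG [:: (b_, false)] 0 isT.
Definition gc : G := @mkG [:: (c_, false)] 0 isT.
Definition gt : G := @mkG [::] 1 isT.

Lemma rel_e : gmul ge ge = ge.
Proof. by apply: val_inj; vm_compute. Qed.
Lemma rel_at : gmul gt ga = gmul ga gt.
Proof. by apply: val_inj; vm_compute. Qed.
Lemma rel_b : gmul gt gb = gmul (gmul gb ga) gt.
Proof. by apply: val_inj; vm_compute. Qed.
Lemma rel_c : gmul gt gc = gmul (gmul (gmul gc ga) ga) gt.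
Proof. by apply: val_inj; vm_compute. Qed.

Fixpoint gpa (n : nat) : G := if n is m.+1 then gmul (gpa m) ga else ge.

Lemma fred_nseq n : fred (nseq n (a_, false)) = nseq n (a_, false).
Proof. by elim: n => [//|n IH] /=; rewrite IH; case: n {IH}. Qed.

Lemma gpa_val n : val (gpa n) = (nseq n (a_, false), 0%R).
Proof.
elim: n => [//|n IH] /=.
rewrite /gmul /= IH /= cats1.
have -> : rcons (nseq n (a_, false)) (a_, false) = nseq n.+1 (a_, false).
  by elim: n {IH} => [//|n IHn] /=; rewrite IHn.
by rewrite fred_nseq.
Qed.

Theorem corollary6p4 (F : fieldType) (p : nat) (hp : (p \in [pchar F])%R)
    (d : nat) (hd : (0 < d)%N) :
  ~ exists phi : G -> 'M[F]_d, GL_hom phi /\ injective phi.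
Proof.
case: d hd => [//|n] _ [phi [[Hu Hm] Hinj]].
have He : phi ge = 1.
  have := Hm ge ge; rewrite rel_e => /(congr1 (mulmx (invmx (phi ge)))).
  by rewrite mulmxA mulVmx ?Hu // mul1mx => E; rewrite -E.
have [N [N0 HN]] : exists N, (0 < N)%N /\ phi ga ^+ N = 1.
  apply: (key hp (Hu ga) (Hu gt) (Hu gb) (Hu gc)).
  - by rewrite -!Hm rel_at.
  - by rewrite -!Hm rel_b.
  - by rewrite -!Hm rel_c.
have Hp m : phi (gpa m) = phi ga ^+ m.
  elim: m => [|m IH] /=; first by rewrite He expr0.
  by rewrite Hm IH exprSr mulmxE.
have := Hp N; rewrite HN -He => /Hinj /(congr1 val); rewrite gpa_val.
by case: N N0 {HN}.
Qed.
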